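(* Let $A_1A_2A_3A_4$ be a (non-degenerate) tetrahedron in $\mathbb{R}^3$ with $A_1A_4+A_2A_3>A_1A_2+A_3A_4$, and let $B_1,B_2,B_3,B_4,B_{12},B_{34}$ be positive real numbers. Put $B_{ST}=\frac{B_{12}+B_{34}}{2}$ and $$f(O_{12},O_{34})=B_1|A_1O_{12}|+B_2|A_2O_{12}|+B_3|A_3O_{34}|+B_4|A_4O_{34}|+B_{ST}\,|O_{12}O_{34}|,\qquad O_{12},O_{34}\in\mathbb{R}^3 .$$ Suppose $(O_{12},O_{34})$ is a minimizer of $f$ such that $O_{12}$ and $O_{34}$ are interior points of the tetrahedron with $O_{12}\neq O_{34}$. Let $\alpha_{12}=\angle A_1O_{12}A_2$, $\alpha_1=\angle A_2O_{12}O_{34}$, $\alpha_{34}=\angle A_3O_{34}A_4$, $\alpha_4=\angle A_3O_{34}O_{12}$. Then $$\cos\alpha_{12}=\frac{B_{ST}^2-B_1^2-B_2^2}{2B_1B_2},\quad \cos\alpha_1=\frac{B_1^2-B_2^2-B_{ST}^2}{2B_2B_{ST}},$$ $$\cos\alpha_{34}=\frac{B_{ST}^2-B_3^2-B_4^2}{2B_3B_4},\quad \cos\alpha_4=\frac{B_4^2-B_3^2-B_{ST}^2}{2B_3B_{ST}}.$$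
   Context: $|XY|$ denotes Euclidean distance and $\angle XYZ\in[0,\pi]$ the angle at $Y$. The problem of minimizing $f$ is the weighted Steiner problem for the four points (with weights $B_i$ at $A_i$ and weights $B_{12},B_{34}$ at the two interior nodes $O_{12},O_{34}$, the nodes being the weighted Fermat–Torricelli points). *)

(* Defs.v *)
From Stdlib Require Import Reals.
Open Scope R_scope.

Record pt := Pt { px : R; py : R; pz : R }.

Definition vsub (a b : pt) : pt := Pt (px a - px b) (py a - py b) (pz a - pz b).
Definition dot (u v : pt) : R := px u * px v + py u * py v + pz u * pz v.
Definition norm (u : pt) : R := sqrt (dot u u).

Definition edist (x y : pt) : R := norm (vsub x y).

(* angle XYZ in [0, pi] at Y (for X, Z distinct from Y) *)
Definition angle (x y z : pt) : R :=
  acos (dot (vsub x y) (vsub z y) / (edist x y * edist z y)).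

Definition det3 (u v w : pt) : R :=
  px u * (py v * pz w - pz v * py w)
  - py u * (px v * pz w - pz v * px w)
  + pz u * (px v * py w - py v * px w).

Definition nondegenerate_tetra (a1 a2 a3 a4 : pt) : Prop :=
  det3 (vsub a2 a1) (vsub a3 a1) (vsub a4 a1) <> 0.

Definition in_tetra_interior (a1 a2 a3 a4 p : pt) : Prop :=
  exists l1 l2 l3 l4 : R,
    0 < l1 /\ 0 < l2 /\ 0 < l3 /\ 0 < l4 /\ l1 + l2 + l3 + l4 = 1 /\
    px p = l1 * px a1 + l2 * px a2 + l3 * px a3 + l4 * px a4 /\
    py p = l1 * py a1 + l2 * py a2 + l3 * py a3 + l4 * py a4 /\
    pz p = l1 * pz a1 + l2 * pz a2 + l3 * pz a3 + l4 * pz a4.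

Definition fobj (a1 a2 a3 a4 : pt) (b1 b2 b3 b4 bst : R) (o12 o34 : pt) : R :=
  b1 * edist a1 o12 + b2 * edist a2 o12 + b3 * edist a3 o34 + b4 * edist a4 o34
  + bst * edist o12 o34.

(* Main.v *)
Require Import Defs.
From Stdlib Require Import Reals Lra Psatz.
From Coquelicot Require Import Coquelicot.
Open Scope R_scope.

Definition padd (o : pt) (t : R) (v : pt) : pt :=
  Pt (px o + t * px v) (py o + t * py v) (pz o + t * pz v).

Lemma pos_dist A O : A <> O -> 0 < dot (vsub A O) (vsub A O).
Proof.
  intro H. destruct A as [a b c], O as [x y z]; unfold dot, vsub; simpl.
  destruct (Req_dec a x); destruct (Req_dec b y); destruct (Req_dec c z);
    try (subst; now elim H); nra.
Qed.

Lemma D1 A O v : A <> O ->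
  is_derive (fun t => edist A (padd O t v)) 0 (-(dot (vsub A O) v) / edist A O).
Proof.
  intro H. pose proof (pos_dist A O H) as P.
  destruct A as [a b c], O as [x y z], v as [p q r].
  unfold edist, Defs.norm, dot, vsub, padd in *; simpl in *.
  auto_derive.
  - replace (x + 0 * p) with x by ring. replace (y + 0 * q) with y by ring.
    replace (z + 0 * r) with z by ring. lra.
  - replace (x + 0 * p) with x by ring. replace (y + 0 * q) with y by ring.
    replace (z + 0 * r) with z by ring.
    assert (0 < sqrt ((a - x) * (a - x) + (b - y) * (b - y) + (c - z) * (c - z))) by (apply sqrt_lt_R0; lra).
    unfold Rminus in *. field. lra.
Qed.

Lemma min_deriv (g : R -> R) l : is_derive g 0 l -> (forall t, g 0 <= g t) -> l = 0.
Proof.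
  intros D M. apply is_derive_Reals in D.
  destruct (Rtotal_order l 0) as [Hl|[Hl|Hl]]; auto; exfalso.
  - destruct (D (- l / 2)) as [d Hd]; [lra|].
    pose (h := d / 2). assert (0 < h) by (unfold h; destruct d; simpl; lra).
    specialize (Hd h). assert (Hh : Rabs h < d) by (pose proof (cond_pos d); unfold Rabs; destruct (Rcase_abs h); unfold h in *; lra).
    specialize (Hd ltac:(lra) Hh). specialize (M (0 + h)).
    assert (0 <= (g (0 + h) - g 0) / h).
    { unfold Rdiv. apply Rmult_le_pos; [lra| left; apply Rinv_0_lt_compat; lra]. }
    apply Rabs_def2 in Hd. lra.
  - destruct (D (l / 2)) as [d Hd]; [lra|].
    pose (h := - (d / 2)). assert (h < 0) by (unfold h; destruct d; simpl; lra).
    specialize (Hd h). assert (Hh : Rabs h < d) by (pose proof (cond_pos d); unfold Rabs; destruct (Rcase_abs h); unfold h in *; lra).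
    specialize (Hd ltac:(lra) Hh). specialize (M (0 + h)).
    assert ((g (0 + h) - g 0) / h <= 0).
    { unfold Rdiv. replace ((g (0 + h) - g 0) * / h) with (- ((g (0 + h) - g 0) * / - h)).
      2:{ rewrite Rinv_opp; ring. }
      assert (0 <= (g (0 + h) - g 0) * / - h); [|lra].
      apply Rmult_le_pos; [lra| left; apply Rinv_0_lt_compat; lra]. }
    apply Rabs_def2 in Hd. lra.
Qed.

Lemma padd0 O v : padd O 0 v = O.
Proof. destruct O; unfold padd; simpl; f_equal; ring. Qed.

Lemma grad_zero (A B C O : pt) (b1 b2 b3 : R) :
  A <> O -> B <> O -> C <> O ->
  (forall v t, b1 * edist A O + b2 * edist B O + b3 * edist C O <=
     b1 * edist A (padd O t v) + b2 * edist B (padd O t v) + b3 * edist C (padd O t v)) ->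
  forall v, b1 * (-(dot (vsub A O) v) / edist A O) + b2 * (-(dot (vsub B O) v) / edist B O)
           + b3 * (-(dot (vsub C O) v) / edist C O) = 0.
Proof.
  intros HA HB HC M v.
  apply (min_deriv (fun t => b1 * edist A (padd O t v) + b2 * edist B (padd O t v) + b3 * edist C (padd O t v))).
  - apply (is_derive_plus (fun t => b1 * edist A (padd O t v) + b2 * edist B (padd O t v))
                          (fun t => b3 * edist C (padd O t v))).
    + apply (is_derive_plus (fun t => b1 * edist A (padd O t v))
                          (fun t => b2 * edist B (padd O t v)));
      apply is_derive_scal; apply D1; auto.
    + apply is_derive_scal; apply D1; auto.
  - intro t. simpl. rewrite padd0. apply M.
Qed.

Lemma alg (b1 b2 b3 e1x e1y e1z e2x e2y e2z ex ey ez : R) :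
  0 < b1 -> 0 < b2 -> 0 < b3 ->
  e1x*e1x + e1y*e1y + e1z*e1z = 1 -> e2x*e2x + e2y*e2y + e2z*e2z = 1 ->
  ex*ex + ey*ey + ez*ez = 1 ->
  b1*e1x + b2*e2x + b3*ex = 0 -> b1*e1y + b2*e2y + b3*ey = 0 -> b1*e1z + b2*e2z + b3*ez = 0 ->
  e1x*e2x + e1y*e2y + e1z*e2z = (b3^2 - b1^2 - b2^2)/(2*b1*b2) /\
  e2x*ex + e2y*ey + e2z*ez = (b1^2 - b2^2 - b3^2)/(2*b2*b3).
Proof.
  intros p1 p2 p3 u1 u2 u3 hx hy hz. split.
  - assert (ex = -(b1*e1x + b2*e2x)/b3) by (field_simplify_eq; lra).
    assert (ey = -(b1*e1y + b2*e2y)/b3) by (field_simplify_eq; lra).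
    assert (ez = -(b1*e1z + b2*e2z)/b3) by (field_simplify_eq; lra).
    subst ex ey ez.
    assert (K : b3^2 = b1^2*(e1x*e1x + e1y*e1y + e1z*e1z) + b2^2*(e2x*e2x + e2y*e2y + e2z*e2z)
       + 2*b1*b2*(e1x*e2x + e1y*e2y + e1z*e2z)).
    { replace (b3^2) with (b3^2 * 1) by ring. rewrite <- u3. field. lra. }
    rewrite u1, u2 in K. field_simplify_eq; [|lra]. nra.
  - assert (e1x = -(b2*e2x + b3*ex)/b1) by (field_simplify_eq; lra).
    assert (e1y = -(b2*e2y + b3*ey)/b1) by (field_simplify_eq; lra).
    assert (e1z = -(b2*e2z + b3*ez)/b1) by (field_simplify_eq; lra).
    subst e1x e1y e1z.
    assert (K : b1^2 = b2^2*(e2x*e2x + e2y*e2y + e2z*e2z) + b3^2*(ex*ex + ey*ey + ez*ez)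
       + 2*b2*b3*(e2x*ex + e2y*ey + e2z*ez)).
    { replace (b1^2) with (b1^2 * 1) by ring. rewrite <- u1. field. lra. }
    rewrite u2, u3 in K. field_simplify_eq; [|lra]. nra.
Qed.

Lemma nrm_facts A O : A <> O -> 0 < edist A O /\ edist A O * edist A O = dot (vsub A O) (vsub A O).
Proof.
  intro H. pose proof (pos_dist A O H). unfold edist, Defs.norm. split.
  - apply sqrt_lt_R0; lra.
  - apply sqrt_sqrt; lra.
Qed.

Lemma unit_bound x y z a b c : x*x+y*y+z*z = 1 -> a*a+b*b+c*c = 1 -> -1 <= x*a+y*b+z*c <= 1.
Proof. intros. pose proof (Rle_0_sqr (x-a)). pose proof (Rle_0_sqr (y-b)). pose proof (Rle_0_sqr (z-c)).
  pose proof (Rle_0_sqr (x+a)). pose proof (Rle_0_sqr (y+b)). pose proof (Rle_0_sqr (z+c)).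
  unfold Rsqr in *. split; nra. Qed.

Lemma key (A B C O : pt) (b1 b2 b3 : R) :
  0 < b1 -> 0 < b2 -> 0 < b3 ->
  A <> O -> B <> O -> C <> O ->
  (forall v t, b1 * edist A O + b2 * edist B O + b3 * edist C O <=
     b1 * edist A (padd O t v) + b2 * edist B (padd O t v) + b3 * edist C (padd O t v)) ->
  cos (angle A O B) = (b3^2 - b1^2 - b2^2)/(2*b1*b2) /\
  cos (angle B O C) = (b1^2 - b2^2 - b3^2)/(2*b2*b3).
Proof.
  intros p1 p2 p3 HA HB HC M.
  pose proof (grad_zero A B C O b1 b2 b3 HA HB HC M) as G.
  destruct (nrm_facts A O HA) as [n1p n1s].
  destruct (nrm_facts B O HB) as [n2p n2s].
  destruct (nrm_facts C O HC) as [n3p n3s].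
  unfold angle.
  set (n1 := edist A O) in *. set (n2 := edist B O) in *. set (n3 := edist C O) in *.
  destruct A as [a1 a2 a3], B as [c1 c2 c3], C as [d1 d2 d3], O as [x y z].
  unfold dot, vsub in *; simpl in *.
  set (e1x := (a1 - x)/n1). set (e1y := (a2 - y)/n1). set (e1z := (a3 - z)/n1).
  set (e2x := (c1 - x)/n2). set (e2y := (c2 - y)/n2). set (e2z := (c3 - z)/n2).
  set (ex := (d1 - x)/n3). set (ey := (d2 - y)/n3). set (ez := (d3 - z)/n3).
  specialize (G (Pt (b1*e1x + b2*e2x + b3*ex) (b1*e1y + b2*e2y + b3*ey) (b1*e1z + b2*e2z + b3*ez))).
  simpl in G.
  assert (W : - ((b1*e1x + b2*e2x + b3*ex)^2 + (b1*e1y + b2*e2y + b3*ey)^2 + (b1*e1z + b2*e2z + b3*ez)^2) = 0).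
  { rewrite <- G. unfold e1x, e1y, e1z, e2x, e2y, e2z, ex, ey, ez. field. lra. }
  pose proof (pow2_ge_0 (b1*e1x + b2*e2x + b3*ex)).
  pose proof (pow2_ge_0 (b1*e1y + b2*e2y + b3*ey)).
  pose proof (pow2_ge_0 (b1*e1z + b2*e2z + b3*ez)).
  assert (wx : b1*e1x + b2*e2x + b3*ex = 0) by nra.
  assert (wy : b1*e1y + b2*e2y + b3*ey = 0) by nra.
  assert (wz : b1*e1z + b2*e2z + b3*ez = 0) by nra.
  assert (u1 : e1x*e1x + e1y*e1y + e1z*e1z = 1).
  { unfold e1x, e1y, e1z. field_simplify_eq; lra. }
  assert (u2 : e2x*e2x + e2y*e2y + e2z*e2z = 1).
  { unfold e2x, e2y, e2z. field_simplify_eq; lra. }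
  assert (u3 : ex*ex + ey*ey + ez*ez = 1).
  { unfold ex, ey, ez. field_simplify_eq; lra. }
  destruct (alg b1 b2 b3 e1x e1y e1z e2x e2y e2z ex ey ez p1 p2 p3 u1 u2 u3 wx wy wz) as [R1 R2].
  replace (((a1 - x) * (c1 - x) + (a2 - y) * (c2 - y) + (a3 - z) * (c3 - z)) / (n1 * n2))
    with (e1x*e2x + e1y*e2y + e1z*e2z) by (unfold e1x, e1y, e1z, e2x, e2y, e2z; field; lra).
  replace (((c1 - x) * (d1 - x) + (c2 - y) * (d2 - y) + (c3 - z) * (d3 - z)) / (n2 * n3))
    with (e2x*ex + e2y*ey + e2z*ez) by (unfold e2x, e2y, e2z, ex, ey, ez; field; lra).
  rewrite !cos_acos by (apply unit_bound; assumption).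
  split; assumption.
Qed.

Lemma edist_sym x y : edist x y = edist y x.
Proof. unfold edist, Defs.norm, dot, vsub; simpl. f_equal; ring. Qed.

Lemma angle_sym x y z : angle x y z = angle z y x.
Proof. unfold angle. f_equal. unfold dot; simpl. f_equal; ring. Qed.

Lemma lin_dep (v2 v3 v4 : pt) k2 k3 k4 :
  k2 * px v2 + k3 * px v3 + k4 * px v4 = 0 ->
  k2 * py v2 + k3 * py v3 + k4 * py v4 = 0 ->
  k2 * pz v2 + k3 * pz v3 + k4 * pz v4 = 0 ->
  det3 v2 v3 v4 <> 0 -> k2 = 0 /\ k3 = 0 /\ k4 = 0.
Proof.
  intros hx hy hz D.
  destruct v2 as [a b c], v3 as [d e f], v4 as [g h i]; simpl in *.
  set (X := k2*a+k3*d+k4*g) in *. set (Y := k2*b+k3*e+k4*h) in *. set (Z := k2*c+k3*f+k4*i) in *.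
  set (DD := det3 _ _ _) in *.
  assert (E2 : k2 * DD = X*(e*i-f*h) - Y*(d*i-f*g) + Z*(d*h-e*g))
    by (unfold DD, X, Y, Z, det3; simpl; ring).
  assert (E3 : k3 * DD = a*(Y*i - Z*h) - b*(X*i - Z*g) + c*(X*h - Y*g))
    by (unfold DD, X, Y, Z, det3; simpl; ring).
  assert (E4 : k4 * DD = a*(e*Z - f*Y) - b*(d*Z - f*X) + c*(d*Y - e*X))
    by (unfold DD, X, Y, Z, det3; simpl; ring).
  rewrite hx, hy, hz in E2, E3, E4.
  repeat split.
  - destruct (Rmult_integral k2 DD); [lra|auto|contradiction].
  - destruct (Rmult_integral k3 DD); [lra|auto|contradiction].
  - destruct (Rmult_integral k4 DD); [lra|auto|contradiction].
Qed.

Lemma interior_ne a1 a2 a3 a4 p :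
  nondegenerate_tetra a1 a2 a3 a4 -> in_tetra_interior a1 a2 a3 a4 p ->
  a1 <> p /\ a2 <> p /\ a3 <> p /\ a4 <> p.
Proof.
  intros D [l1 [l2 [l3 [l4 [h1 [h2 [h3 [h4 [hs [hx [hy hz]]]]]]]]]]].
  unfold nondegenerate_tetra in D.
  assert (l1 = 1 - l2 - l3 - l4) by lra. subst l1.
  repeat split; intro E; subst p; simpl in *.
  - destruct (lin_dep (vsub a2 a1) (vsub a3 a1) (vsub a4 a1) l2 l3 l4 ltac:(simpl; nra) ltac:(simpl; nra) ltac:(simpl; nra) D). lra.
  - destruct (lin_dep (vsub a2 a1) (vsub a3 a1) (vsub a4 a1) (l2 - 1) l3 l4 ltac:(simpl; nra) ltac:(simpl; nra) ltac:(simpl; nra) D). lra.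
  - destruct (lin_dep (vsub a2 a1) (vsub a3 a1) (vsub a4 a1) l2 (l3 - 1) l4 ltac:(simpl; nra) ltac:(simpl; nra) ltac:(simpl; nra) D). lra.
  - destruct (lin_dep (vsub a2 a1) (vsub a3 a1) (vsub a4 a1) l2 l3 (l4 - 1) ltac:(simpl; nra) ltac:(simpl; nra) ltac:(simpl; nra) D). lra.
Qed.

Theorem theorem3 (A1 A2 A3 A4 : pt) (B1 B2 B3 B4 B12 B34 : R) (O12 O34 : pt) :
  nondegenerate_tetra A1 A2 A3 A4 ->
  edist A1 A4 + edist A2 A3 > edist A1 A2 + edist A3 A4 ->
  0 < B1 -> 0 < B2 -> 0 < B3 -> 0 < B4 -> 0 < B12 -> 0 < B34 ->
  let BST := (B12 + B34) / 2 in
  (forall P Q : pt,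
     fobj A1 A2 A3 A4 B1 B2 B3 B4 BST O12 O34 <= fobj A1 A2 A3 A4 B1 B2 B3 B4 BST P Q) ->
  in_tetra_interior A1 A2 A3 A4 O12 ->
  in_tetra_interior A1 A2 A3 A4 O34 ->
  O12 <> O34 ->
  cos (angle A1 O12 A2) = (BST ^ 2 - B1 ^ 2 - B2 ^ 2) / (2 * B1 * B2) /\
  cos (angle A2 O12 O34) = (B1 ^ 2 - B2 ^ 2 - BST ^ 2) / (2 * B2 * BST) /\
  cos (angle A3 O34 A4) = (BST ^ 2 - B3 ^ 2 - B4 ^ 2) / (2 * B3 * B4) /\
  cos (angle A3 O34 O12) = (B4 ^ 2 - B3 ^ 2 - BST ^ 2) / (2 * B3 * BST).
Proof.
  intros D _ p1 p2 p3 p4 p12 p34 BST M I12 I34 N.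
  assert (pS : 0 < BST) by (unfold BST; lra).
  destruct (interior_ne _ _ _ _ _ D I12) as [n1 [n2 _]].
  destruct (interior_ne _ _ _ _ _ D I34) as [_ [_ [n3 n4]]].
  assert (N' : O34 <> O12) by (intro E; apply N; auto).
  destruct (key A1 A2 O34 O12 B1 B2 BST p1 p2 pS n1 n2 N') as [R1 R2].
  { intros v t. specialize (M (padd O12 t v) O34). unfold fobj in M.
    rewrite (edist_sym O12 O34), (edist_sym (padd O12 t v) O34) in M. lra. }
  destruct (key A4 A3 O12 O34 B4 B3 BST p4 p3 pS n4 n3 N) as [R3 R4].
  { intros v t. specialize (M O12 (padd O34 t v)). unfold fobj in M.
    lra. }
  rewrite angle_sym in R3.
  repeat split; auto.
  rewrite R3. f_equal; ring.
Qed.
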